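(* For an integer $n\ge1$, let $\mathcal{G}^{\mathrm{tree}}_{n,1}$ be the directed tree with unit edge weights consisting of a root node and two branches: a directed path of $n$ edges from a leaf $k$ to the root and a single edge from a leaf $j$ to the root (so it has $n+2$ nodes). Then the effective resistance between its two leaves is $$r(n,1)=2(n-1)+2^{2-n}.$$
   Context: For a directed graph with nonnegative adjacency matrix $A=[a_{i,j}]$ ($a_{i,j}>0$ iff there is an edge from $i$ to $j$), let $D$ be the diagonal matrix of out-degrees $d_k=\sum_j a_{k,j}$ and $L=D-A$. For a connected graph (one with a node reachable from every node) on $N$ nodes, let $\Pi=I_N-\frac1N\mathbf{1}_N\mathbf{1}_N^T$, $Q\in\mathbb{R}^{(N-1)\times N}$ with $Q\mathbf{1}_N=0$, $QQ^T=I_{N-1}$, $Q^TQ=\Pi$; $\overline L=QLQ^T$; $\Sigma$ the unique solution of $\overline L\Sigma+\Sigma\overline L^T=I_{N-1}$; $X=2Q^T\Sigma Q$; and the effective resistance $r_{k,j}=x_{k,k}+x_{j,j}-2x_{k,j}$. More generally, for integers $n,m\ge1$, $\mathcal{G}^{\mathrm{tree}}_{n,m}$ denotes the unit-weight directed tree with $n+m+1$ nodes formed by a directed path of $n$ edges from one leaf to a root and a directed path of $m$ edges from another leaf to the same root, and $r(n,m)$ denotes the effective resistance between its two leaves. *)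

(* Defs.v *)
From HB Require Import structures.
From mathcomp Require Import all_boot all_order all_algebra.
Set Implicit Arguments. Unset Strict Implicit. Unset Printing Implicit Defensive.
Import Order.TTheory GRing.Theory Num.Theory.
Local Open Scope ring_scope.

Definition laplacian (R : comRingType) (N : nat) (A : 'M[R]_N) : 'M[R]_N :=
  diag_mx (\row_k (\sum_j A k j)) - A.

Definition proj_basis (R : fieldType) (N : nat) (Q : 'M[R]_(N, N.+1)) : Prop :=
  [/\ Q *m (const_mx 1 : 'cV[R]_(N.+1)) = 0,
      Q *m Q^T = 1%:M &
      Q^T *m Q = 1%:M - (N.+1)%:R^-1 *: (const_mx 1 : 'M[R]_(N.+1))].

Definition red_laplacian (R : comRingType) (N : nat) (Q : 'M[R]_(N, N.+1))
  (A : 'M[R]_(N.+1)) : 'M[R]_N := Q *m laplacian A *m Q^T.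

Definition lyap_sol (R : comRingType) (N : nat) (Lb Sigma : 'M[R]_N) : Prop :=
  Lb *m Sigma + Sigma *m Lb^T = 1%:M.

Definition Xmat (R : comRingType) (N : nat) (Q : 'M[R]_(N, N.+1)) (Sigma : 'M[R]_N)
  : 'M[R]_(N.+1) := 2%:R *: (Q^T *m Sigma *m Q).

Definition eff_res (R : comRingType) (N : nat) (Q : 'M[R]_(N, N.+1)) (Sigma : 'M[R]_N)
  (k j : 'I_(N.+1)) : R :=
  let X := Xmat Q Sigma in X k k + X j j - 2%:R * X k j.

(* Unit-weight directed tree G^tree_{n,m} on nodes 0 .. n+m:
   path 0 -> 1 -> ... -> n (leaf k = 0, root = n), and
   path n+m -> n+m-1 -> ... -> n+1 -> n (leaf j = n+m).
   a_{i,j} = 1 iff there is an edge from i to j. *)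
Definition tree_adj (R : nzRingType) (n m : nat) : 'M[R]_((n + m).+1) :=
  \matrix_(i, j) ((((i < n)%N && (j == i.+1 :> nat)) ||
                  ((n < i)%N && (j == i.-1 :> nat))) : bool)%:R.

Definition leaf_k (n m : nat) : 'I_((n + m).+1) := ord0.
Definition leaf_j (n m : nat) : 'I_((n + m).+1) := ord_max.

(* Main.v *)
Require Import Defs.
From HB Require Import structures.
From mathcomp Require Import all_boot all_order all_algebra.
From mathcomp Require Import ring lra zify.
Import Order.TTheory GRing.Theory Num.Theory.
Local Open Scope ring_scope.
Set Implicit Arguments. Unset Strict Implicit. Unset Printing Implicit Defensive.

Definition ev {R : nzRingType} {N : nat} (x : nat) : 'cV[R]_N :=
  \col_i ((i : nat) == x)%:R.

Lemma sum_ev (R : nzRingType) N x : (x < N)%N ->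
  \sum_(i < N) (((i : nat) == x)%:R : R) = 1.
Proof.
move=> hx; rewrite (bigD1 (Ordinal hx)) //= eqxx big1 ?addr0 // => i hi.
case: eqP => // e; case/negP: hi; apply/eqP; exact: val_inj.
Qed.

Lemma mulmx_ev (R : nzRingType) p N (M : 'M[R]_(p, N)) x (hx : (x < N)%N) i :
  (M *m ev x) i 0 = M i (Ordinal hx).
Proof.
rewrite mxE (bigD1 (Ordinal hx)) //= mxE eqxx mulr1 big1 ?addr0 // => j hj.
rewrite mxE; case: eqP => [e|]; last by rewrite mulr0.
case/negP: hj; apply/eqP; exact: val_inj.
Qed.

Lemma ev_entry (R : nzRingType) N (M : 'M[R]_N) x y (hx : (x < N)%N) (hy : (y < N)%N) :
  ((ev x)^T *m M *m ev y) 0 0 = M (Ordinal hx) (Ordinal hy).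
Proof.
rewrite mulmx_ev mxE (bigD1 (Ordinal hx)) //= !mxE eqxx mul1r big1 ?addr0 // => j hj.
rewrite !mxE; case: eqP => [e|]; last by rewrite mul0r.
case/negP: hj; apply/eqP; exact: val_inj.
Qed.

Lemma ev_dot (R : nzRingType) N x y (hy : (y < N)%N) :
  (((ev x)^T *m (ev y : 'cV[R]_N)) 0 0) = (y == x)%:R.
Proof. by rewrite mulmx_ev !mxE. Qed.

Definition Bf {R : nzRingType} {N : nat} (X : 'M[R]_N) (v w : 'cV[R]_N) : R :=
  (v^T *m X *m w) 0 0.

Lemma BfBl (R : comRingType) N (X : 'M[R]_N) v1 v2 w :
  Bf X (v1 - v2) w = Bf X v1 w - Bf X v2 w.
Proof. by rewrite /Bf raddfB /= !mulmxBl [LHS]mxE [X in _ + X]mxE. Qed.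
Lemma BfBr (R : comRingType) N (X : 'M[R]_N) v w1 w2 :
  Bf X v (w1 - w2) = Bf X v w1 - Bf X v w2.
Proof. by rewrite /Bf !mulmxBr [LHS]mxE [X in _ + X]mxE. Qed.
Lemma Bf0l (R : comRingType) N (X : 'M[R]_N) w : Bf X 0 w = 0.
Proof. by rewrite /Bf trmx0 !mul0mx mxE. Qed.
Lemma Bf0r (R : comRingType) N (X : 'M[R]_N) v : Bf X v 0 = 0.
Proof. by rewrite /Bf !mulmx0 mxE. Qed.

Definition sz {R : nzRingType} {N : nat} (v : 'cV[R]_N) := \sum_i v i 0 = 0.

Lemma J_sz (R : comRingType) N (v : 'cV[R]_N) : sz v -> (const_mx 1 : 'M[R]_N) *m v = 0.
Proof.
move=> h; apply/matrixP => i j; rewrite ord1 !mxE -[RHS]h.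
by apply: eq_bigr => k _; rewrite mxE mul1r.
Qed.

Lemma sz_ev (R : comRingType) N x y : (x < N)%N -> (y < N)%N ->
  sz (ev x - ev y : 'cV[R]_N).
Proof.
move=> hx hy; rewrite /sz.
under eq_bigr do rewrite !mxE.
by rewrite sumrB !sum_ev // subrr.
Qed.

Lemma key (R : fieldType) k (Q : 'M[R]_(k, k.+1)) Sig (A : 'M[R]_k.+1) v w :
  proj_basis Q -> lyap_sol (red_laplacian Q A) Sig -> sz v -> sz w ->
  Bf (Xmat Q Sig) ((laplacian A)^T *m v) w + Bf (Xmat Q Sig) v ((laplacian A)^T *m w)
  = 2 * ((v^T *m w) 0 0).
Proof.
case=> Q1 QQt QtQ; rewrite /lyap_sol /red_laplacian => hL hv hw.
move: hL; move: (laplacian A) => L hL.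
have Pv : forall u, sz u -> Q^T *m Q *m u = u.
  by move=> u hu; rewrite QtQ mulmxBl mul1mx -scalemxAl J_sz // scaler0 subr0.
have vP : v^T *m Q^T *m Q = v^T.
  have : (Q^T *m Q *m v)^T = v^T by rewrite Pv.
  by rewrite !trmx_mul trmxK mulmxA.
have wP : forall p (M : 'M[R]_(p, k.+1)), M *m Q^T *m Q *m w = M *m w.
  by move=> p M; rewrite -!mulmxA (mulmxA Q^T) Pv.
have E := congr1 (fun M => v^T *m Q^T *m M *m Q *m w) hL.
move: E => /=; rewrite mulmx1 vP.
rewrite !trmx_mul !trmxK !mulmxDr !mulmxDl !mulmxA vP wP.
move/(congr1 (fun M : 'M[R]_1 => M 0 0)); rewrite mxE => <-.
have addE : forall M1 M2 : 'M[R]_1, M1 0 0 + M2 0 0 = (M1 + M2) 0 0.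
  by move=> M1 M2; rewrite mxE.
have sclE : forall (a : R) (M1 : 'M[R]_1), (a *: M1) 0 0 = a * M1 0 0.
  by move=> a M1; rewrite mxE.
rewrite /Bf /Xmat trmx_mul trmxK -!scalemxAr -!scalemxAl addE -scalerDr sclE.
by rewrite !mulmxA [in LHS]mxE.
Qed.

Lemma LTev (R : rcfType) n x (hx : (x < (n+1).+1)%N) :
  (laplacian (tree_adj R n 1))^T *m ev x =
  if (x < n)%N then ev x - ev x.+1 else if x == n then 0 else ev x - ev x.-1.
Proof.
apply/matrixP => i j; rewrite ord1 {j} mulmx_ev /laplacian !mxE /=.
under eq_bigr do rewrite mxE /=.
rewrite -val_eqE /=.
case: (ltnP x n) => hxn.
  have hn : (n < x)%N = false by lia.
  rewrite hn /=; under eq_bigr do rewrite orbF.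
  by rewrite sum_ev; [rewrite orbF !mxE eq_sym | lia].
have hn : (x < n)%N = false by lia.
have [exn|hne] := eqVneq x n.
  by subst x; rewrite hn /= big1 // mxE mul0rn subr0.
idtac.
have hn' : (n < x)%N by lia.
rewrite hn' /= sum_ev; last by lia.
by rewrite !mxE eq_sym.
Qed.

Lemma subsub (V : zmodType) (u v w : V) : (u - w) - (v - w) = u - v.
Proof. by rewrite opprB addrA subrK. Qed.

Lemma dotE (R : comRingType) N x y (hx : (x < N)%N) (hy : (y < N)%N) :
  Bf (1%:M : 'M[R]_N) (ev x) (ev y) = (x == y)%:R.
Proof. by rewrite /Bf ev_entry !mxE. Qed.

Section Tree.
Variable R : rcfType.
Variable n : nat.
Hypothesis hn : (1 <= n)%N.
Variable Q : 'M[R]_(n + 1, (n + 1).+1).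
Variable Sig : 'M[R]_(n + 1).
Hypothesis hQ : proj_basis Q.
Hypothesis hS : lyap_sol (red_laplacian Q (tree_adj R n 1)) Sig.

Local Notation N := ((n + 1).+1).
Local Notation X := (Xmat Q Sig).
Local Notation L := (laplacian (tree_adj R n 1)).
Fact dd_key : unit. Proof. exact: tt. Qed.
Definition dd (a : nat) : 'cV[R]_N := locked_with dd_key (ev a - ev n).
Definition ss : 'cV[R]_N := locked_with dd_key (ev n.+1 - ev n).
Lemma ddE a : dd a = ev a - ev n. Proof. by rewrite /dd locked_withE. Qed.
Lemma ssE : ss = ev n.+1 - ev n. Proof. by rewrite /ss locked_withE. Qed.

Lemma LTd a : (a < n)%N -> L^T *m dd a = dd a - dd a.+1.
Proof.
move=> ha; rewrite !ddE mulmxBr !LTev; try lia.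
by rewrite ha ltnn eqxx subr0 subsub.
Qed.

Lemma LTs : L^T *m ss = ss.
Proof.
rewrite ssE mulmxBr !LTev; try lia.
have -> : (n.+1 < n)%N = false by lia.
have -> : (n.+1 == n) = false by lia.
by rewrite ltnn eqxx subr0.
Qed.

Lemma dd_n : dd n = 0.
Proof. by rewrite !ddE subrr. Qed.

Lemma sz_dd a : (a <= n)%N -> sz (dd a).
Proof. move=> ha; rewrite ?ddE ?ssE; apply: sz_ev; lia. Qed.
Lemma sz_ss : sz ss.
Proof. rewrite ?ddE ?ssE; apply: sz_ev; lia. Qed.

Lemma keyT v w : sz v -> sz w ->
  Bf X (L^T *m v) w + Bf X v (L^T *m w) = 2 * Bf 1%:M v w.
Proof. move=> hv hw; rewrite key //; by rewrite /Bf mulmx1. Qed.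

Lemma dot_ss : Bf (1%:M : 'M[R]_N) ss ss = 2.
Proof.
rewrite ssE !(BfBl, BfBr) !dotE; try lia.
rewrite eqxx; have -> : (n.+1 == n) = false by lia.
have -> : (n == n.+1) = false by lia.
rewrite ?eqxx /= ?mulr1n ?mulr0n; lra.
Qed.

Lemma dot_ds a : (a < n)%N -> Bf (1%:M : 'M[R]_N) (dd a) ss = 1.
Proof.
move=> ha; rewrite ssE !ddE !(BfBl, BfBr) !dotE; try lia.
rewrite eqxx; have -> : (n == n.+1) = false by lia.
have -> : (a == n.+1) = false by lia.
have -> : (a == n) = false by lia.
rewrite ?eqxx /= ?mulr1n ?mulr0n; lra.
Qed.

Lemma dot_sd a : (a < n)%N -> Bf (1%:M : 'M[R]_N) ss (dd a) = 1.
Proof.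
move=> ha; rewrite ssE !ddE !(BfBl, BfBr) !dotE; try lia.
rewrite eqxx; have -> : (n.+1 == n) = false by lia.
have -> : (n.+1 == a) = false by lia.
have -> : (n == a) = false by lia.
rewrite ?eqxx /= ?mulr1n ?mulr0n; lra.
Qed.

Lemma dot_dd a b : (a < n)%N -> (b < n)%N ->
  Bf (1%:M : 'M[R]_N) (dd a) (dd b) = (a == b)%:R + 1.
Proof.
move=> ha hb; rewrite !ddE !(BfBl, BfBr) !dotE; try lia.
rewrite eqxx; have -> : (n == b) = false by lia.
have -> : (a == n) = false by lia.
rewrite ?eqxx /= ?mulr1n ?mulr0n; lra.
Qed.

Lemma B_ss : Bf X ss ss = 2.
Proof.
have := keyT sz_ss sz_ss; rewrite LTs dot_ss => h; lra.
Qed.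

Lemma two_inv : (2^-1 : R) * 2 = 1.
Proof. by rewrite mulVf // pnatr_eq0. Qed.

Lemma B_ds a : (a <= n)%N -> Bf X (dd a) ss = 2 - 2 * (2^-1)^+(n - a).
Proof.
move=> ha.
suff H : forall k, (k <= n)%N -> Bf X (dd (n - k)) ss = 2 - 2 * (2^-1)^+k.
  have e : (n - (n - a) = a)%N by lia.
  by have := H (n - a)%N; rewrite e; apply; lia.
elim=> [|k IH] hk.
  rewrite subn0 dd_n Bf0l expr0; lra.
have hlt : (n - k.+1 < n)%N by lia.
have := keyT (sz_dd (ltnW hlt)) sz_ss.
rewrite LTd // LTs BfBl dot_ds //.
have -> : ((n - k.+1).+1 = n - k)%N by lia.
rewrite IH; last lia.
rewrite exprS; set t := (2^-1)^+k.
have ht : 2^-1 * t * 2 = t by rewrite mulrAC two_inv mul1r.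
move=> h; lra.
Qed.

Lemma B_sd a : (a <= n)%N -> Bf X ss (dd a) = 2 - 2 * (2^-1)^+(n - a).
Proof.
move=> ha.
suff H : forall k, (k <= n)%N -> Bf X ss (dd (n - k)) = 2 - 2 * (2^-1)^+k.
  have e : (n - (n - a) = a)%N by lia.
  by have := H (n - a)%N; rewrite e; apply; lia.
elim=> [|k IH] hk.
  rewrite subn0 dd_n Bf0r expr0; lra.
have hlt : (n - k.+1 < n)%N by lia.
have := keyT sz_ss (sz_dd (ltnW hlt)).
rewrite LTd // LTs (BfBr _ _ (dd _)) dot_sd //.
have -> : ((n - k.+1).+1 = n - k)%N by lia.
rewrite IH; last lia.
rewrite exprS; set t := (2^-1)^+k.
have ht : 2^-1 * t * 2 = t by rewrite mulrAC two_inv mul1r.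
move=> h; lra.
Qed.

Lemma B_dd a b : (a <= n)%N -> (b <= n)%N ->
  Bf X (dd a) (dd b) = 2 * (n - maxn a b)%:R.
Proof.
move=> ha hb.
suff H : forall k a b, (a <= n)%N -> (b <= n)%N -> ((n - a) + (n - b) <= k)%N ->
  Bf X (dd a) (dd b) = 2 * (n - maxn a b)%:R by apply: H.
elim=> [|k IH] {}a {}b {}ha {}hb hk.
  have ea : a = n by lia.
  have eb : b = n by lia.
  by subst; rewrite dd_n Bf0l maxnn subnn mulr0.
have [ea|ha'] : a = n \/ (a < n)%N by lia.
  subst; rewrite dd_n Bf0l; have -> : maxn n b = n by lia.
  by rewrite subnn mulr0.
have [eb|hb'] : b = n \/ (b < n)%N by lia.
  subst; rewrite dd_n Bf0r; have -> : maxn a n = n by lia.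
  by rewrite subnn mulr0.
have := keyT (sz_dd ha) (sz_dd hb).
rewrite LTd // LTd // BfBl BfBr dot_dd // (IH a.+1 b) ?(IH a b.+1); try lia.
have [hab|hab|hab] := ltngtP a b.
- have -> : maxn a.+1 b = b by lia.
  have -> : maxn a b.+1 = b.+1 by lia.
  have -> : (n - b = (n - b.+1).+1)%N by lia.
  rewrite -natr1 /= ?mulr0n ?mulr1n; move=> h; lra.
- have -> : maxn a.+1 b = a.+1 by lia.
  have -> : maxn a b.+1 = a by lia.
  have -> : (n - a = (n - a.+1).+1)%N by lia.
  rewrite -natr1 /= ?mulr0n ?mulr1n; move=> h; lra.
- subst b.
  have -> : maxn a.+1 a = a.+1 by lia.
  have -> : maxn a a.+1 = a.+1 by lia.
  rewrite ?maxnn ?eqxx.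
  have -> : (n - a = (n - a.+1).+1)%N by lia.
  rewrite -natr1 /= ?mulr0n ?mulr1n; move=> h; lra.
Qed.

Lemma ev_entry' (M : 'M[R]_N) (i j : 'I_N) :
  Bf M (ev i) (ev j) = M i j.
Proof. by rewrite /Bf ev_entry; congr (M _ _); apply: val_inj. Qed.

Lemma hsym x y : (x < N)%N -> (y < N)%N ->
  Bf X (ev x - ev n) (ev y - ev n) = Bf X (ev y - ev n) (ev x - ev n).
Proof.
move=> hx hy.
have [hx'|ex] : (x <= n)%N \/ x = n.+1 by lia.
  have [hy'|ey] : (y <= n)%N \/ y = n.+1 by lia.
    by rewrite -!ddE !B_dd // maxnC.
  by subst y; rewrite -ssE -ddE B_ds // B_sd.
have [hy'|ey] : (y <= n)%N \/ y = n.+1 by lia.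
  by subst x; rewrite -ssE -ddE B_ds // B_sd.
by subst.
Qed.

Lemma Xsym : X^T = X.
Proof.
case: hQ => Q1 QQt QtQ.
set P := Q^T *m Q.
set H : 'M[R]_N := 1%:M - ev n *m (const_mx 1 : 'rV[R]_N).
have e1 : Q^T *m Q *m Q^T = Q^T by rewrite -mulmxA QQt mulmx1.
have XPP : X = P *m X *m P.
  rewrite /P /Xmat -scalemxAr -scalemxAl; congr (_ *: _).
  by rewrite !mulmxA e1 -(mulmxA (Q^T *m Sig) Q Q^T) QQt mulmx1.
have c0 : (const_mx 1 : 'rV[R]_N) *m Q^T = 0.
  by rewrite -[const_mx 1](trmx_const) -trmx_mul Q1 trmx0.
have HP : H *m P = P.
  by rewrite /H /P mulmxBl mul1mx -mulmxA (mulmxA (const_mx 1)) c0 mul0mx mulmx0 subr0.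
have PT : P^T = P by rewrite /P trmx_mul trmxK.
have XK : X = P^T *m (H^T *m X *m H) *m P.
  have : X = (H *m P)^T *m X *m (H *m P) by rewrite HP PT -XPP.
  by rewrite trmx_mul !mulmxA.
have Hev : forall i, (i < N)%N -> H *m ev i = ev i - ev n.
  move=> i hi; rewrite /H mulmxBl mul1mx -mulmxA.
  have -> : (const_mx 1 : 'rV[R]_N) *m ev i = 1%:M.
    by apply/matrixP => a b; rewrite !ord1 mulmx_ev !mxE.
  by rewrite mulmx1.
have Ksym : (H^T *m X *m H)^T = H^T *m X *m H.
  apply/matrixP => i j; rewrite mxE -!ev_entry' /Bf.
  rewrite !mulmxA -!mulmxA.
  rewrite !Hev // !mulmxA -!trmx_mul !Hev //; exact: (hsym (ltn_ord j) (ltn_ord i)).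
clearbody P; move: Ksym XK; move: (H^T *m X *m H) => K Ksym XK.
by rewrite {1}XK trmx_mul trmx_mul Ksym trmxK mulmxA -XK.
Qed.


End Tree.

Theorem lemma6 (R : rcfType) (n : nat) (hn : (1 <= n)%N)
    (Q : 'M[R]_(n + 1, (n + 1).+1)) (Sigma : 'M[R]_(n + 1)) :
  proj_basis Q ->
  lyap_sol (red_laplacian Q (tree_adj R n 1)) Sigma ->
  eff_res Q Sigma (leaf_k n 1) (leaf_j n 1)
    = 2 * (n%:R - 1) + 2 ^ (2 - n%:Z).
Proof.
move=> hQ hS.
set X := Xmat Q Sigma.
have XS : X^T = X := Xsym hn hQ hS.
have sym : X ord_max ord0 = X ord0 ord_max by rewrite -{1}XS mxE.
have hev : ev (n + 1) = ev n.+1 :> 'cV[R]_((n+1).+1) by congr ev; rewrite addn1.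
have e00 : Bf X (ev 0) (ev 0) = X ord0 ord0 by exact: (ev_entry' X ord0 ord0).
have e0j : Bf X (ev 0) (ev n.+1) = X ord0 ord_max by rewrite -hev; exact: (ev_entry' X ord0 ord_max).
have ej0 : Bf X (ev n.+1) (ev 0) = X ord_max ord0 by rewrite -hev; exact: (ev_entry' X ord_max ord0).
have ejj : Bf X (ev n.+1) (ev n.+1) = X ord_max ord_max by rewrite -hev; exact: (ev_entry' X ord_max ord_max).
have E : Bf X (dd R n 0 - ss R n) (dd R n 0 - ss R n)
   = X ord0 ord0 + X ord_max ord_max - 2 * X ord0 ord_max.
  rewrite ddE ssE subsub !BfBl !BfBr e00 e0j ej0 ejj sym; lra.
rewrite /eff_res -/X /leaf_k /leaf_j -E.
rewrite (BfBl _ (dd R n 0)) !BfBr B_dd // B_ds // B_sd // B_ss // maxnn !subn0.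
rewrite expfzDr ?pnatr_eq0 // -exprnN -exprVn.
set t := (2^-1)^+n.
have h4 : (2 : R) ^ (2 : int) = 2 * 2 by rewrite -exprnP expr2.
rewrite h4; lra.
Qed.
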